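(* Let $K$ be a finite simplicial complex equipped with two assignments of edge lengths, giving discrete geodesic distance functions $f^1_p,f^2_p$ for each vertex $p$, and let $\epsilon=\max_{p\in\mathrm{Vert}(K)}\max_{q\in\mathrm{Vert}(K)}|f^1_p(q)-f^2_p(q)|$. Fix $d$ and let $\mathcal{X}^1$ and $\mathcal{X}^2$ be subgroup filtrations of $H_d(K;\mathbb{Z}_2)$ obtained from optimal homology bases with respect to the sizes $S^1$ and $S^2$ respectively. Then $\mathrm{dist}(\mathcal{X}^1,\mathcal{X}^2)\le\epsilon$.
   Context: For a given edge-length assignment, $f_p(q)$ is the shortest-path length from vertex $p$ to vertex $q$ in the 1-skeleton of $K$, and $f_p(\sigma)=\max_{q\in\mathrm{Vert}(\sigma)}f_p(q)$ for a simplex $\sigma$. The geodesic ball $B_p^t=\{\sigma\in K:f_p(\sigma)\le t\}$ carries a class $h$ if it contains a cycle representing $h$; $r_{f_p}(h)$ is the least $t$ for which $B_p^t$ carries $h$, and the size of $h$ is $S(h)=\min_{p}r_{f_p}(h)$ ($S^1,S^2$ denote sizes computed from $f^1,f^2$). Let $\beta=\dim H_d(K;\mathbb{Z}_2)$. An optimal homology basis is a set of $\beta$ linearly independent (nonzero) classes whose sizes have minimal sum; such a basis is obtained greedily by scanning nontrivial classes in increasing order of size and keeping each one linearly independent of those already kept. Given an optimal basis $h_1,\dots,h_\beta$ sorted so that $S(h_i)\le S(h_{i+1})$, its subgroup filtration is $\mathcal{X}=\{\psi_0,\psi_1,\dots,\psi_\beta\}$ with $\psi_i=\mathrm{span}(h_1,\dots,h_i)$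 ($\psi_0$ trivial), and $S(\psi_i):=S(h_i)$ for $i\ge1$. For filtrations $\mathcal{X}^1,\mathcal{X}^2$, the projection $\mathrm{proj}(\psi^1_i,\mathcal{X}^2)$ is $\psi^2_j$ with $j$ the least index such that $\psi^1_i\subseteq\psi^2_j$ (and symmetrically). The distance is $\mathrm{dist}(\mathcal{X}^1,\mathcal{X}^2)=\max\{\max_i|S^1(\psi^1_i)-S^2(\mathrm{proj}(\psi^1_i,\mathcal{X}^2))|,\ \max_i|S^2(\psi^2_i)-S^1(\mathrm{proj}(\psi^2_i,\mathcal{X}^1))|\}$, the maxima taken over $i=1,\dots,\beta$. *)

(* Defs.v *)
From HB Require Import structures.
From mathcomp Require Import classical_sets reals.
From mathcomp Require Import all_boot all_order all_algebra.
Set Implicit Arguments. Unset Strict Implicit. Unset Printing Implicit Defensive.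
Import Order.TTheory GRing.Theory Num.Theory.
Local Open Scope ring_scope.

Section Defs.
Variable T : finType.
Variable R : realType.

Definition simplicial_complex (K : {set {set T}}) : Prop :=
  [/\ set0 \notin K,
      (forall s t : {set T}, s \in K -> t \subset s -> t != set0 -> t \in K)
    & (forall v : T, [set v] \in K)].

Definition F2 : Type := ('F_2)%type.
Definition chain := {ffun {set T} -> F2^o}.

Definition chi (s : {set T}) : chain := [ffun x => (x == s)%:R].

Definition boundary (c : chain) : chain :=
  [ffun t : {set T} => if t == set0 then 0
     else \sum_(s : {set T} | (t \subset s) && (#|s| == #|t|.+1)) c s].

Definition Cd (K : {set {set T}}) (d : nat) : {vspace chain} :=
  <<[seq chi s | s <- enum [set s in K | #|s| == d.+1]]>>%VS.
Definition Zd K d : {vspace chain} := (Cd K d :&: lker (linfun boundary))%VS.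
Definition Bd K d : {vspace chain} := (linfun boundary @: Cd K d.+1)%VS.
Definition betti K d : nat := (\dim (Zd K d) - \dim (Bd K d))%N.

(* A homology class is represented by a cycle z; classes of z, z' agree iff
   z - z' \in B_d.  A sequence of classes is linearly independent iff the
   representatives are cycles and are linearly independent modulo B_d. *)
Definition indep K d (zs : seq chain) : bool :=
  all (fun z => z \in Zd K d) zs &&
  (\dim (<<zs>> + Bd K d)%VS == size zs + \dim (Bd K d))%N.

Definition adj (K : {set {set T}}) (a b : T) : bool := (a != b) && ([set a; b] \in K).

Definition walk_len (l : {set T} -> R) (p : T) (w : seq T) : R :=
  \sum_(e <- zip (p :: w) w) l [set e.1; e.2].

Definition geod (K : {set {set T}}) (l : {set T} -> R) (p q : T) : R :=
  inf [set walk_len l p w | w in [set w : seq T | path (adj K) p w /\ last p w = q]]%classic.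

(* B_p^t carries the class of z: some cycle homologous to z is supported on
   simplices sigma with f_p(sigma) <= t, i.e. all of whose vertices q satisfy
   f_p(q) <= t. *)
Definition carries K d (f : T -> T -> R) (p : T) (t : R) (z : chain) : Prop :=
  exists2 z' : chain, (z' \in Zd K d) && (z' - z \in Bd K d) &
    forall s : {set T}, z' s != 0 -> forall q, q \in s -> f p q <= t.

Definition radius K d (f : T -> T -> R) (p : T) (z : chain) : R :=
  inf [set t | carries K d f p t z]%classic.

Definition hsize K d (f : T -> T -> R) (z : chain) : R :=
  inf [set r | exists p : T, r = radius K d f p z]%classic.

Definition optimal_basis K d (f : T -> T -> R) (zs : seq chain) : Prop :=
  [/\ size zs = betti K d, indep K d zs &
      forall gs : seq chain, size gs = betti K d -> indep K d gs ->
        \sum_(z <- zs) hsize K d f z <= \sum_(g <- gs) hsize K d f g].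

Definition size_sorted K d (f : T -> T -> R) (zs : seq chain) : bool :=
  sorted (fun x y => hsize K d f x <= hsize K d f y) zs.

(* psi_i = span(h_1, ..., h_i), as the subspace of Z_d it spans together with B_d *)
Definition psi K d (zs : seq chain) (i : nat) : {vspace chain} :=
  (<<take i zs>> + Bd K d)%VS.

Definition psi_size K d (f : T -> T -> R) (zs : seq chain) (i : nat) : R :=
  hsize K d f (nth 0 zs i.-1).

Definition proj_idx K d (zs1 zs2 : seq chain) (i : nat) : nat :=
  find (fun j => (psi K d zs1 i <= psi K d zs2 j)%VS) (iota 0 (size zs2).+1).

Definition filt_dist K d (f1 f2 : T -> T -> R) (zs1 zs2 : seq chain) : R :=
  Num.max
    (\big[Num.max/0]_(1 <= i < (size zs1).+1)
        `|psi_size K d f1 zs1 i - psi_size K d f2 zs2 (proj_idx K d zs1 zs2 i)|)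
    (\big[Num.max/0]_(1 <= i < (size zs2).+1)
        `|psi_size K d f2 zs2 i - psi_size K d f1 zs1 (proj_idx K d zs2 zs1 i)|).

Definition geod_eps K (l1 l2 : {set T} -> R) : R :=
  \big[Num.max/0]_(p : T) \big[Num.max/0]_(q : T) `|geod K l1 p q - geod K l2 p q|.

End Defs.

(* Main.v *)
Require Import Defs.
From HB Require Import structures.
From mathcomp Require Import boolp classical_sets reals.
From mathcomp Require Import zify lra.
From mathcomp Require Import all_boot all_order all_algebra.
Import Order.TTheory GRing.Theory Num.Theory.
Local Open Scope ring_scope.

Section Bd.
Variable T : finType.
Lemma boundary_linear : linear (@boundary T).
Proof.
move=> a c c'; apply/ffunP => t; rewrite !ffunE.
case: ifP => _; first by rewrite scaler0 addr0.
rewrite scaler_sumr -big_split /=.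
by apply: eq_bigr => s _; rewrite !ffunE.
Qed.
HB.instance Definition _ := GRing.isLinear.Build _ _ _ _ (@boundary T) boundary_linear.
Lemma lfun_bd (c : chain T) : linfun (@boundary T) c = boundary c.
Proof. by rewrite lfunE. Qed.

Lemma sum_pred1F2 (P : pred {set T}) x :
  \sum_(y | P y) ((y == x)%:R : F2^o) = (P x)%:R.
Proof.
case Px: (P x).
  rewrite (bigD1 x) //= eqxx big1 ?addr0 // => y /andP[_ /negbTE ->] //.
rewrite big1 // => y Py; have /negbTE -> // : y != x.
by apply: contraTneq Py => ->; rewrite Px.
Qed.

Lemma bd_chi s : boundary (chi s) =
  [ffun x : {set T} => ((x != set0) && (x \subset s) && (#|s| == #|x|.+1))%:R].
Proof.
apply/ffunP => x; rewrite !ffunE.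
case: eqP => [->|_] //=.
under eq_bigr => y _ do rewrite ffunE.
by rewrite sum_pred1F2.
Qed.

Lemma bd_chi_sum (s : {set T}) (d : nat) : #|s| = d.+2 ->
  boundary (chi s) = \sum_(t : {set T} | (t \subset s) && (#|t| == d.+1)) chi t.
Proof.
move=> hs; rewrite bd_chi; apply/ffunP => x; rewrite sum_ffunE !ffunE.
under eq_bigr => y _ do rewrite ffunE eq_sym.
rewrite sum_pred1F2 hs eqSS; congr (_%:R).
rewrite eq_sym; case: (eqVneq x set0) => [->|] //=.
- by rewrite cards0 andbF.
by move=> _; rewrite [d.+1 == _]eq_sym.
Qed.

Lemma two_F2 : (2%:R : F2^o) = 0.
Proof. by apply/val_inj. Qed.

Lemma count_between (x s : {set T}) (d : nat) : #|s| = d.+2 -> x \subset s -> #|x| = d ->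
  #|[set t : {set T} | [&& (t \subset s), (#|t| == d.+1), (x \subset t) & (#|t| == #|x|.+1)]]| = 2%N.
Proof.
move=> hs xs hx.
have -> : [set t : {set T} | [&& (t \subset s), (#|t| == d.+1), (x \subset t) & (#|t| == #|x|.+1)]]
   = [set a |: x | a in s :\: x].
  apply/setP => t; rewrite !inE; apply/idP/imsetP.
  - case/and4P => ts _ xt /eqP ht.
    have : #|t :\: x| == 1%N by rewrite cardsD (setIidPr xt) ht subSnn.
    case/cards1P => a ha; exists a.
      have : a \in t :\: x by rewrite ha set11.
      by rewrite !inE => /andP[-> /(subsetP ts)->].
    by rewrite -ha setUC -{1}(setIidPr xt) setID.
  - case=> a; rewrite !inE => /andP[ax as_] ->.
    rewrite subUset sub1set as_ xs cardsU1 ax hx subsetUr /=.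
    by rewrite eqxx.
rewrite card_in_imset; last first.
  move=> a b; rewrite !inE => /andP[ax _] /andP[bx _] e.
  have : a \in b |: x by rewrite -e setU11.
  by rewrite !inE (negbTE ax) orbF => /eqP.
by rewrite cardsD (setIidPr xs) hs hx; lia.
Qed.

Lemma sum_bool (P Q : pred {set T}) :
  \sum_(t | P t) ((Q t)%:R : F2^o) = (#|[pred t | P t && Q t]|)%:R.
Proof.
rewrite -sumr_const [RHS](eq_bigl (fun t => P t && Q t)) //.
rewrite big_mkcondr /=; apply: eq_bigr => t _; by case: (Q t).
Qed.

Lemma bd_bd_chi (s : {set T}) (d : nat) : #|s| = d.+2 -> boundary (boundary (chi s)) = 0.
Proof.
move=> hs; rewrite (@bd_chi_sum s d hs) raddf_sum.
apply/ffunP => x; rewrite sum_ffunE !ffunE.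
under eq_bigr => t _ do rewrite /= bd_chi ffunE.
rewrite sum_bool.
case: (eqVneq x set0) => [->|xn0].
  rewrite (@eq_card0 _ [pred t : {set T} | _ & _]) ?mul0rn // => t /=.
  by rewrite !inE /= andbF.
case h: ((x \subset s) && (#|x| == d)).
  case/andP: h => xs /eqP hx.
  rewrite (@eq_card _ _ [set t : {set T} | [&& (t \subset s), (#|t| == d.+1), (x \subset t) & (#|t| == #|x|.+1)]]); last first.
    by move=> t; rewrite !inE /= -!andbA.
  by rewrite count_between //; exact: two_F2.
rewrite -(mulr0n (1 : F2^o)); congr (_ *+ _); apply: eq_card0 => t; rewrite !inE /=.
apply/negbTE; apply: contraFN h => /and3P[/andP[ts /eqP ht] xt /eqP e].
by rewrite (subset_trans xt ts) /= -eqSS -e ht.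
Qed.

Lemma Bd_sub_Zd (K : {set {set T}}) d : simplicial_complex K -> (Bd K d <= Zd K d)%VS.
Proof.
case=> K0 Kface _.
rewrite /Bd /Cd limg_span; apply/span_subvP => c /mapP[c0 /mapP[s]].
rewrite mem_enum inE => /andP[sK /eqP hs] -> ->.
rewrite lfunE /= memv_cap memv_ker lfunE /= (@bd_bd_chi s d hs) eqxx andbT.
rewrite (@bd_chi_sum s d hs); apply: memv_suml => t /andP[ts /eqP ht].
apply: memv_span; apply/mapP; exists t => //.
rewrite mem_enum inE ht eqxx andbT; apply: (Kface s) => //.
by apply/eqP => t0; rewrite t0 cards0 in ht.
Qed.
End Bd.
Set Implicit Arguments. Unset Strict Implicit.
Section Inf.
Variable R : realType.
Implicit Types A B : set R.

Lemma inf_half A B (e : R) : has_inf A ->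
  (forall a, A a -> exists2 b, B b & b <= a + e) ->
  (forall b, B b -> exists2 a, A a & a <= b + e) ->
  has_inf B /\ inf B <= inf A + e.
Proof.
move=> [[a0 Aa0] [m lbm]] hAB hBA.
have hB : has_inf B.
  split; first by case: (hAB a0 Aa0) => b Bb _; exists b.
  exists (m - e) => b Bb; case: (hBA b Bb) => a Aa le.
  have := lbm a Aa; lra.
split => //.
have : inf B - e <= inf A.
  apply: lb_le_inf; first by exists a0.
  move=> a Aa; case: (hAB a Aa) => b Bb le.
  have := ge_inf hB.2 Bb; lra.
lra.
Qed.

Lemma inf_close A B (e : R) : 0 <= e ->
  (forall a, A a -> exists2 b, B b & b <= a + e) ->
  (forall b, B b -> exists2 a, A a & a <= b + e) ->
  `|inf A - inf B| <= e.
Proof.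
move=> e0 hAB hBA.
case: (pselect (has_inf A)) => hA.
  have [hB le1] := inf_half hA hAB hBA.
  have [_ le2] := inf_half hB hBA hAB.
  rewrite ler_norml; apply/andP; split; lra.
have hB : ~ has_inf B.
  by move=> hB; apply: hA; have [] := inf_half hB hBA hAB.
by rewrite (inf_out hA) (inf_out hB) subrr normr0.
Qed.

Lemma radius_close (T : finType) K d (f1 f2 : T -> T -> R) (e : R) p z :
  0 <= e -> (forall p q, `|f1 p q - f2 p q| <= e) ->
  `|radius K d f1 p z - radius K d f2 p z| <= e.
Proof.
move=> e0 hf; apply: inf_close => // t [z' hz' hs].
  exists (t + e) => //; exists z' => // s hs' q hq.
  have := hs s hs' q hq; have := hf p q; rewrite ler_norml => /andP[h1 h2]; lra.
exists (t + e) => //; exists z' => // s hs' q hq.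
have := hs s hs' q hq; have := hf p q; rewrite ler_norml => /andP[h1 h2]; lra.
Qed.

Lemma hsize_close (T : finType) K d (f1 f2 : T -> T -> R) (e : R) z :
  0 <= e -> (forall p q, `|f1 p q - f2 p q| <= e) ->
  `|hsize K d f1 z - hsize K d f2 z| <= e.
Proof.
move=> e0 hf; apply: inf_close => // r [p ->].
  exists (radius K d f2 p z); first by exists p.
  have := radius_close K d p z e0 hf; rewrite ler_norml => /andP[h1 h2]; lra.
exists (radius K d f1 p z); first by exists p.
have := radius_close K d p z e0 hf; rewrite ler_norml => /andP[h1 h2]; lra.
Qed.
End Inf.
Section LA.
Variable T : finType.
Variable R : realType.
Variable K : {set {set T}}.
Variable d : nat.
Hypothesis BZ : (Bd K d <= Zd K d)%VS.
Local Notation B := (Bd K d).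
Local Notation Z := (Zd K d).

Lemma subv_dim (U V : {vspace chain T}) : (U <= V)%VS -> (\dim V <= \dim U)%N -> (V <= U)%VS.
Proof. by move=> s h; rewrite -(eq_leqif (dimv_leqif_sup s)) eqn_leq h dimvS. Qed.

Lemma dim_strict (U V : {vspace chain T}) : (U <= V)%VS -> ~~ (V <= U)%VS -> (\dim U < \dim V)%N.
Proof. by move=> s h; rewrite (ltn_leqif (dimv_leqif_sup s)). Qed.

Lemma psi_dim zs i : indep K d zs -> (i <= size zs)%N ->
  \dim (psi K d zs i) = (i + \dim B)%N.
Proof.
case/andP => _ /eqP hd hi.
have e : (<<zs>> + B = psi K d zs i + <<drop i zs>>)%VS.
  by rewrite /psi -{1}(cat_take_drop i zs) span_cat -addvA [(<<drop _ _>> + _)%VS]addvC addvA.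
have h1 := dimv_add_leqif (psi K d zs i) <<drop i zs>>.
have h2 := dimv_add_leqif <<take i zs>> B.
have h3 := dim_span (drop i zs).
have h4 := dim_span (take i zs).
move: h1 h2 => [h1 _] [h2 _].
rewrite -e hd in h1; rewrite size_drop in h3; rewrite size_takel // in h4.
rewrite /psi in h1 *; move: h1 h2 h3 h4 hi.
set a := \dim (<<take i zs>> + B)%VS; set b := \dim <<take i zs>>; set c := \dim <<drop i zs>>; set x := \dim B.
have L : forall a b c x s i : nat, (s + x <= a + c)%N -> (a <= b + x)%N ->
  (c <= s - i)%N -> (b <= i)%N -> (i <= s)%N -> a = (i + x)%N by move=> *; lia.
exact: L.
Qed.

Lemma psi_subZ zs i : indep K d zs -> (psi K d zs i <= Z)%VS.
Proof.
case/andP => /allP hZ _; rewrite subv_add BZ andbT.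
by apply/span_subvP => x /mem_take /hZ.
Qed.

Lemma psi_mono zs i j : (i <= j)%N -> (psi K d zs i <= psi K d zs j)%VS.
Proof.
move=> hij; apply: addvS (subvv _); apply: sub_span => x hx.
by move: hx; rewrite -(take_takel zs hij) => /mem_take.
Qed.

Lemma take_in_psi zs i x : x \in take i zs -> x \in psi K d zs i.
Proof. by move=> hx; apply: (subvP (addvSl _ _)); apply: memv_span. Qed.

Lemma psi_full zs : indep K d zs -> size zs = betti K d -> (Z <= psi K d zs (size zs))%VS.
Proof.
move=> hi hs; apply: subv_dim; first exact: psi_subZ.
rewrite psi_dim // hs /betti; have := dimvS BZ; lia.
Qed.

Lemma nat1 m k : (0 < k)%N -> (m < k)%N -> (m <= k.-1)%N. Proof. lia. Qed.
Lemma nat2 k n : (0 < k)%N -> (k <= n)%N -> (k.-1 < n)%N. Proof. lia. Qed.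

Lemma nat3 k m : (0 < k)%N -> (k <= m.+1)%N -> (k.-1 <= m)%N. Proof. lia. Qed.

Lemma exchange (f : T -> T -> R) zs g k :
  optimal_basis K d f zs -> size_sorted K d f zs -> g \in Z ->
  (0 < k <= size zs)%N -> g \notin psi K d zs k.-1 ->
  hsize K d f (nth 0 zs k.-1) <= hsize K d f g.
Proof.
case=> hsz hind hopt hsort gZ /andP[k0 ks] gk.
have gfull : g \in psi K d zs (size zs) by apply: (subvP (psi_full hind hsz)).
have ex : exists m, g \in psi K d zs m by exists (size zs).
case: (ex_minnP ex) => m gm mmin.
have mk : (k <= m)%N.
  rewrite leqNgt; apply/negP => mk; apply/negP: gk; rewrite negbK.
  by apply: (subvP (psi_mono zs (_ : (m <= k.-1)%N))); first exact: nat1 k0 mk.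
have msz : (m <= size zs)%N by apply: mmin.
case: m gm mmin mk msz => [|m'] gm mmin mk msz; first by rewrite leqn0 in mk; rewrite (eqP mk) in k0.
have gm' : g \notin psi K d zs m'.
  by apply/negP => /mmin; rewrite ltnn.
set zm := nth 0 zs m'.
have ezs : zs = take m' zs ++ zm :: drop m'.+1 zs.
  by rewrite -drop_nth ?cat_take_drop.
set gs := take m' zs ++ g :: drop m'.+1 zs.
have eU : (psi K d zs m'.+1 <= psi K d zs m' + <[g]>)%VS.
  have sU : (psi K d zs m' + <[g]> <= psi K d zs m'.+1)%VS.
    by rewrite subv_add psi_mono // -memvE.
  apply: subv_dim sU _.
  have := dim_strict (addvSl (psi K d zs m') <[g]>).
  rewrite subv_add subvv -memvE gm' => /(_ isT).
  by rewrite !psi_dim // ?addSn // ltnW.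
have zmU : zm \in (<<gs>> + B)%VS.
  apply: (subvP _ _ (subvP eU _ _)); last first.
    by apply: take_in_psi; rewrite (take_nth 0 msz) mem_rcons mem_head.
  rewrite subv_add; apply/andP; split.
    by apply: addvS (subvv _); apply: sub_span => x hx; rewrite mem_cat hx.
  by rewrite -memvE; apply: (subvP (addvSl _ _)); apply: memv_span; rewrite mem_cat mem_head orbT.
have sgs : size gs = size zs by rewrite [in RHS]ezs !size_cat.
have igs : indep K d gs.
  case/andP: hind => /allP hZ /eqP hd.
  apply/andP; split.
    apply/allP => x; rewrite mem_cat in_cons => /or3P[hx|/eqP->|hx] //.
      by apply: hZ; apply: mem_take hx.
    by apply: hZ; apply: mem_drop hx.
  rewrite sgs -hd eqn_leq; apply/andP; split; last first.
    apply: dimvS; rewrite subv_add addvSr andbT; apply/span_subvP => x.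
    rewrite {1}ezs mem_cat in_cons => /or3P[hx|/eqP->|hx] //.
      by apply: (subvP (addvSl _ _)); apply: memv_span; rewrite mem_cat hx.
    by apply: (subvP (addvSl _ _)); apply: memv_span; rewrite mem_cat in_cons hx !orbT.
  rewrite hd -sgs; apply: leq_trans (dimv_add_leqif _ _).1 _.
  by rewrite leq_add2r dim_span.
have := hopt gs (etrans sgs hsz) igs.
rewrite {1}ezs !big_cat !big_cons /= => hle.
have hmk : hsize K d f (nth 0 zs k.-1) <= hsize K d f zm.
  apply: (sorted_leq_nth (leT := fun x y => hsize K d f x <= hsize K d f y)).
  - by move=> x y z; apply: le_trans.
  - by move=> x.
  - exact: hsort.
  - by rewrite inE; exact: nat2 k0 ks.
  - by rewrite inE.
  - exact: nat3 k0 mk.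
lra.
Qed.

Lemma sorted_take_le (f : T -> T -> R) zs i z : size_sorted K d f zs ->
  (0 < i <= size zs)%N -> z \in take i zs ->
  hsize K d f z <= hsize K d f (nth 0 zs i.-1).
Proof.
move=> hs /andP[i0 isz] /(nthP 0) [k]; rewrite size_takel // => ki <-.
rewrite nth_take //.
apply: (sorted_leq_nth (leT := fun x y => hsize K d f x <= hsize K d f y)).
- by move=> x y z'; apply: le_trans.
- by move=> x.
- exact: hs.
- by rewrite inE; exact: leq_trans ki isz.
- by rewrite inE; exact: nat2 i0 isz.
- exact: nat1 i0 ki.
Qed.

Lemma fin_ineq (A B z1 z2 y1 y2 e : R) : B <= z2 -> z1 <= A -> `|z1 - z2| <= e ->
  A <= y1 -> y2 <= B -> `|y1 - y2| <= e -> `|A - B| <= e.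
Proof.
move=> h1 h2 /[dup] h3; rewrite ler_norml => /andP[h3a h3b] h4 h5.
rewrite !ler_norml => /andP[h6 h7]; apply/andP; split; lra.
Qed.

Lemma main_idx (f1 f2 : T -> T -> R) (e : R) zs1 zs2 i :
  optimal_basis K d f1 zs1 -> size_sorted K d f1 zs1 ->
  optimal_basis K d f2 zs2 -> size_sorted K d f2 zs2 ->
  (forall z, `|hsize K d f1 z - hsize K d f2 z| <= e) ->
  (0 < i <= size zs1)%N ->
  `|psi_size K d f1 zs1 i - psi_size K d f2 zs2 (proj_idx K d zs1 zs2 i)| <= e.
Proof.
move=> o1 s1 o2 s2 he hi1; have /andP[i0 isz] := hi1.
have o1' := o1; have o2' := o2.
case: o1' => hsz1 hind1 _; case: o2' => hsz2 hind2 _.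
have sz : size zs1 = size zs2 by rewrite hsz1 hsz2.
set P := fun j => (psi K d zs1 i <= psi K d zs2 j)%VS.
have hasPj : has P (iota 0 (size zs2).+1).
  apply/hasP; exists (size zs2); first by rewrite mem_iota add0n ltnSn.
  exact: subv_trans (psi_subZ _ hind1) (psi_full hind2 hsz2).
rewrite /proj_idx -/P; set j := find P _.
have jlt : (j < (size zs2).+1)%N by rewrite /j -[X in (_ < X)%N](size_iota 0) -has_find.
have Pj : P j.
  by have := nth_find 0 hasPj; rewrite nth_iota.
have hbef : forall j', (j' < j)%N -> ~~ P j'.
  move=> j' hj'; have := before_find 0 hj'; rewrite nth_iota ?add0n => [->//|].
  exact: ltn_trans hj' jlt.
clearbody j.
have ij : (i <= j)%N.
  by have := dimvS Pj; rewrite !psi_dim // leq_add2r.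
have j0 : (0 < j)%N := leq_trans i0 ij.
have [z zt zn] : exists2 z, z \in take i zs1 & z \notin psi K d zs2 j.-1.
  apply/hasP; rewrite -[has _ _]negbK -all_predC; apply/negP => /allP hall.
  apply: (negP (hbef j.-1 _)); first by rewrite ltn_predL.
  rewrite /P subv_add addvSr andbT.
  apply/span_subvP => x /hall /=; by rewrite negbK.
have zZ : z \in Z by case/andP: hind1 => /allP H _; apply: H; apply: mem_take zt.
have hj2 : (0 < j <= size zs2)%N by rewrite j0.
have u1 := exchange o2 s2 zZ hj2 zn.
have u2 := sorted_take_le s1 hi1 zt.
have u3 := he z.
have [y yt yn] : exists2 y, y \in take i zs2 & y \notin psi K d zs1 i.-1.
  apply/hasP; rewrite -[has _ _]negbK -all_predC; apply/negP => /allP hall.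
  have : (psi K d zs2 i <= psi K d zs1 i.-1)%VS.
    rewrite subv_add; apply/andP; split; last exact: addvSr.
    apply/span_subvP => x /hall /=; by rewrite negbK.
  move/dimvS; rewrite !psi_dim ?leq_add2r -?sz //; last exact: leq_trans (leq_pred i) isz.
  by rewrite leqNgt ltn_predL i0.
have yZ : y \in Z by case/andP: hind2 => /allP H _; apply: H; apply: mem_take yt.
have l1 := exchange o1 s1 yZ hi1 yn.
have ytj : y \in take j zs2 by move: yt; rewrite -(take_takel zs2 ij) => /mem_take.
have l2 := sorted_take_le s2 hj2 ytj.
have l3 := he y.
rewrite /psi_size; exact: fin_ineq u1 u2 u3 l1 l2 l3.
Qed.
End LA.

Section Fin.
Variable R : realType.

Lemma bigmax_le (I : eqType) (s : seq I) (F : I -> R) e : 0 <= e ->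
  (forall i, i \in s -> F i <= e) -> \big[Num.max/0]_(i <- s) F i <= e.
Proof.
move=> he; elim: s => [|a s IH] hF; rewrite ?big_nil ?big_cons //.
rewrite ge_max hF ?mem_head //= IH // => i hi; apply: hF.
by rewrite in_cons hi orbT.
Qed.

Lemma le_bigmax (I : eqType) (s : seq I) (F : I -> R) x : x \in s ->
  F x <= \big[Num.max/0]_(i <- s) F i.
Proof.
elim: s => // a s IH; rewrite in_cons big_cons le_max => /orP[/eqP->|hx].
  by rewrite lexx.
by rewrite IH ?orbT.
Qed.

Lemma bigmax_ge0 (I : eqType) (s : seq I) (F : I -> R) :
  0 <= \big[Num.max/0]_(i <- s) F i.
Proof. by elim: s => [|a s IH]; rewrite ?big_nil ?big_cons // le_max IH orbT. Qed.
End Fin.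

Unset Implicit Arguments.

Theorem theorem3p5 (T : finType) (R : realType) (K : {set {set T}})
    (l1 l2 : {set T} -> R) (d : nat) (zs1 zs2 : seq (chain T)) :
  simplicial_complex K ->
  (* edge lengths are nonnegative *)
  (forall e : {set T}, e \in K -> #|e| = 2%N -> 0 <= l1 e /\ 0 <= l2 e) ->
  (* the 1-skeleton of K is connected *)
  (forall p q : T, exists w : seq T, path (adj K) p w /\ last p w = q) ->
  optimal_basis K d (geod K l1) zs1 -> size_sorted K d (geod K l1) zs1 ->
  optimal_basis K d (geod K l2) zs2 -> size_sorted K d (geod K l2) zs2 ->
  filt_dist K d (geod K l1) (geod K l2) zs1 zs2 <= geod_eps K l1 l2.
Proof.
move=> sc _ _ o1 s1 o2 s2.
set e := geod_eps K l1 l2.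
have hpq : forall p q, `|geod K l1 p q - geod K l2 p q| <= e.
  move=> p q; rewrite /e /geod_eps.
  apply: le_trans (le_bigmax (fun p => \big[Num.max/0]_(q : T) `|geod K l1 p q - geod K l2 p q|) (mem_index_enum p)).
  exact: (le_bigmax (fun q => `|geod K l1 p q - geod K l2 p q|) (mem_index_enum q)).
have e0 : 0 <= e by apply: bigmax_ge0.
have he12 : forall z, `|hsize K d (geod K l1) z - hsize K d (geod K l2) z| <= e.
  by move=> z; apply: hsize_close.
have he21 : forall z, `|hsize K d (geod K l2) z - hsize K d (geod K l1) z| <= e.
  by move=> z; rewrite distrC.
have BZ := @Bd_sub_Zd _ K d sc.
rewrite /filt_dist ge_max; apply/andP; split; apply: bigmax_le => // i;
  rewrite mem_index_iota ltnS => hi.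
  exact: (main_idx BZ o1 s1 o2 s2 he12 hi).
exact: (main_idx BZ o2 s2 o1 s1 he21 hi).
Qed.
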